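(* Let $L$ be a finite graded lattice of rank $n$. Then $L$ is supersolvable if and only if $L$ admits an $S_n$ EL-labeling.
   Context: For a finite graded poset $P$ of rank $n$ with least element $\hat0$ and greatest element $\hat1$, let $\mathcal{E}(P)=\{(s,t): t \text{ covers } s\}$ be the set of edges of its Hasse diagram. An edge-labeling is a map $\lambda:\mathcal{E}(P)\to\mathbb{Z}$. For a maximal chain $s=s_0<s_1<\cdots<s_k=t$ of an interval $[s,t]$, its label sequence is $(\lambda(s_0,s_1),\dots,\lambda(s_{k-1},s_k))$; the chain is increasing if this sequence is weakly increasing. An EL-labeling is an edge-labeling such that every interval $[s,t]$ has exactly one increasing maximal chain, and the label sequence of that chain is strictly lexicographically smaller than that of every other maximal chain of $[s,t]$. An $S_n$ EL-labeling is an EL-labeling such that for every maximal chain $\hat0=x_0<x_1<\cdots<x_n=\hat1$ of $P$, the sequence $(\lambda(x_0,x_1),\dots,\lambda(x_{n-1},x_n))$ is a permutation of $[n]=\{1,\dots,n\}$. A finite lattice $L$ is supersolvable if it contains a maximal chain (an M-chain) which, together with any other chain of $L$, generates a distributive sublattice of $L$. *)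

(* Defs.v *)
From mathcomp Require Import all_boot all_order all_algebra.
Set Implicit Arguments. Unset Strict Implicit. Unset Printing Implicit Defensive.
Import Order.TTheory GRing.Theory Num.Theory.

(* A finite lattice with least element \bot and greatest element \top is a
   [finTBLatticeType d]. *)
Section Defs.
Context {disp : Order.disp_t} {L : finTBLatticeType disp}.
Local Open Scope order_scope.

(* y covers x *)
Definition covers (x y : L) : bool :=
  (x < y) && [forall z : L, ~~ ((x < z) && (z < y))].

(* A maximal chain s = s_0 < s_1 < ... < s_k = t of the interval [s,t],
   represented by the sequence c = [:: s_1; ...; s_k] (each s_{i+1} covers s_i). *)
Definition maxchain (s t : L) (c : seq L) : bool :=
  path covers s c && (last s c == t).

Definition graded_rank (n : nat) : Prop :=
  forall c : seq L, maxchain \bot \top c -> size c = n.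

(* edge labelings: only the values on covering pairs matter *)
Definition labeling := L -> L -> int.

Definition labels (lam : labeling) (s : L) (c : seq L) : seq int :=
  pairmap lam s c.

Definition increasing (w : seq int) : bool :=
  sorted (fun a b : int => (a <= b)%R) w.

Fixpoint lexlt (u v : seq int) : bool :=
  match u, v with
  | [::], [::] => false
  | [::], _ :: _ => true
  | _ :: _, [::] => false
  | a :: u', b :: v' => ((a < b)%R) || ((a == b) && lexlt u' v')
  end.

Definition EL_labeling (lam : labeling) : Prop :=
  forall s t : L, s <= t ->
    exists c : seq L,
      [/\ maxchain s t c, increasing (labels lam s c)
        & forall c' : seq L, maxchain s t c' -> c' != c ->
            ~~ increasing (labels lam s c') /\
            lexlt (labels lam s c) (labels lam s c')].

Definition Sn_EL_labeling (n : nat) (lam : labeling) : Prop :=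
  EL_labeling lam /\
  forall c : seq L, maxchain \bot \top c ->
    perm_eq (labels lam \bot c) (map Posz (iota 1 n)).

Definition is_chain (C : {set L}) : bool :=
  [forall x in C, forall y in C, (x <= y) || (y <= x)].

Definition meet_join_closed (S : {set L}) : bool :=
  [forall x in S, forall y in S, (x `&` y \in S) && (x `|` y \in S)].

Definition gen_sublattice (A : {set L}) : {set L} :=
  \bigcap_(S : {set L} | (A \subset S) && meet_join_closed S) S.

Definition distributive_set (S : {set L}) : bool :=
  [forall x in S, forall y in S, forall z in S,
     x `&` (y `|` z) == (x `&` y) `|` (x `&` z)].

Definition supersolvable : Prop :=
  exists c : seq L, maxchain \bot \top c /\
    forall C : {set L}, is_chain C ->
      distributive_set (gen_sublattice ([set x in \bot :: c] :|: C)).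

End Defs.

(* Main.v *)
Require Import Defs.
From mathcomp Require Import all_boot all_order all_algebra.
Set Implicit Arguments. Unset Strict Implicit. Unset Printing Implicit Defensive.
Import Order.TTheory GRing.Theory Num.Theory.

Section Generic.
Context {disp : Order.disp_t} {L : finTBLatticeType disp}.
Local Open Scope order_scope.
Implicit Types (x y z s t u v : L) (c : seq L).

Lemma coversW x y : covers x y -> x < y.
Proof. by case/andP. Qed.

Lemma covers_eq x y z : covers x y -> x < z -> z <= y -> z = y.
Proof.
move=> /andP[_ /forallP /(_ z)] H xz zy.
case: (eqVneq z y) => // zny; by move: H; rewrite xz lt_neqAle zny zy.
Qed.

Lemma maxchain_nil s t : maxchain s t [::] = (s == t).
Proof. by []. Qed.

Lemma maxchain_cons s t v c : maxchain s t (v :: c) = covers s v && maxchain v t c.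
Proof. by rewrite /maxchain /= andbA. Qed.

Lemma maxchain_le s t c : maxchain s t c -> s <= t.
Proof.
elim: c s => [|v c IH] s; first by rewrite maxchain_nil => /eqP->.
rewrite maxchain_cons => /andP[/coversW/ltW sv /IH]; exact: le_trans.
Qed.

Lemma maxchain_cat s u t c1 c2 :
  maxchain s u c1 -> maxchain u t c2 -> maxchain s t (c1 ++ c2).
Proof.
rewrite /maxchain cat_path last_cat => /andP[-> /eqP->] /andP[-> ->]; done.
Qed.

Lemma maxchain_split s t c1 c2 : maxchain s t (c1 ++ c2) ->
  maxchain s (last s c1) c1 /\ maxchain (last s c1) t c2.
Proof.
by rewrite /maxchain cat_path last_cat => /andP[/andP[-> ->] ->]; rewrite eqxx.
Qed.

Lemma maxchain_refl s c : maxchain s s c -> c = [::].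
Proof.
case: c => // v c; rewrite maxchain_cons => /andP[/coversW sv /maxchain_le vs].
by move: (lt_le_trans sv vs); rewrite ltxx.
Qed.

Lemma maxchain_rcons s t c : maxchain s (last s c) c -> covers (last s c) t ->
  maxchain s t (rcons c t).
Proof.
rewrite /maxchain rcons_path last_rcons => /andP[H1 _] H2.
by rewrite H1 H2 eqxx.
Qed.

Lemma exists_maxchain s t : s <= t -> exists c, maxchain s t c.
Proof.
suff H : forall k t', leq #|[set z | z < t']| k -> s <= t' -> exists c, maxchain s t' c.
  by apply: H.
elim=> [|k IH] {}t Hk st.
  case: (eqVneq s t) => [->|nst]; first by exists [::]; rewrite maxchain_nil.
  have sin : s \in [set z | z < t] by rewrite inE lt_neqAle nst st.
  by move: Hk; rewrite leqn0 => /eqP /cards0_eq E; rewrite E inE in sin.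
case: (eqVneq s t) => [->|nst]; first by exists [::]; rewrite maxchain_nil.
have st' : s < t by rewrite lt_neqAle nst st.
pose P := [pred z | (s <= z) && (z < t)].
have Ps : P s by rewrite /P /= lexx st'.
case: (arg_maxnP (fun z => #|[set w | w < z]|) Ps) => u /andP[su ut] umax.
have covut : covers u t.
  apply/andP; split => //; apply/forallP => z; apply/negP => /andP[uz zt].
  have := umax z; rewrite /P /= (le_trans su (ltW uz)) zt => /(_ isT).
  apply/negP; rewrite -ltnNge; apply: proper_card; apply/properP; split.
    by apply/subsetP => w; rewrite !inE => /lt_trans; apply.
  by exists u; rewrite !inE ?uz ?ltxx.
have : leq #|[set z | z < u]| k.
  rewrite -ltnS; apply: leq_trans Hk; apply: proper_card; apply/properP; split.
    by apply/subsetP => w; rewrite !inE => /lt_trans; apply.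
  by exists u; rewrite !inE ?ut ?ltxx.
move=> /IH /(_ su) [c Hc]; exists (rcons c t).
apply: maxchain_rcons; first by rewrite (eqP (proj2 (andP Hc))).
by rewrite (eqP (proj2 (andP Hc))).
Qed.

Lemma gen_sub (A : {set L}) : A \subset gen_sublattice A.
Proof. by apply/bigcapsP => S /andP[]. Qed.

Lemma gen_min (A S : {set L}) : A \subset S -> meet_join_closed S ->
  gen_sublattice A \subset S.
Proof. by move=> AS cS; apply: bigcap_inf; rewrite AS cS. Qed.

Lemma gen_meet (A : {set L}) x y : x \in gen_sublattice A -> y \in gen_sublattice A ->
  x `&` y \in gen_sublattice A.
Proof.
move=> /bigcapP Hx /bigcapP Hy; apply/bigcapP => S PS.
move: (PS) => /andP[_ /forallP /(_ x) /implyP /(_ (Hx _ PS)) /forallP /(_ y)].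
by move=> /implyP /(_ (Hy _ PS)) /andP[].
Qed.

Lemma gen_join (A : {set L}) x y : x \in gen_sublattice A -> y \in gen_sublattice A ->
  x `|` y \in gen_sublattice A.
Proof.
move=> /bigcapP Hx /bigcapP Hy; apply/bigcapP => S PS.
move: (PS) => /andP[_ /forallP /(_ x) /implyP /(_ (Hx _ PS)) /forallP /(_ y)].
by move=> /implyP /(_ (Hy _ PS)) /andP[].
Qed.

Lemma distr_sub (S T : {set L}) : S \subset T -> distributive_set T -> distributive_set S.
Proof.
move=> /subsetP ST /forallP H; apply/forallP => x; apply/implyP => xS.
apply/forallP => y; apply/implyP => yS; apply/forallP => z; apply/implyP => zS.
by move: (H x) => /implyP /(_ (ST _ xS)) /forallP /(_ y) /implyP /(_ (ST _ yS))
   /forallP /(_ z) /implyP /(_ (ST _ zS)).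
Qed.

Lemma distrP (S : {set L}) x y z : distributive_set S -> x \in S -> y \in S -> z \in S ->
  x `&` (y `|` z) = (x `&` y) `|` (x `&` z).
Proof.
move=> /forallP H xS yS zS; apply/eqP.
by move: (H x) => /implyP /(_ xS) /forallP /(_ y) /implyP /(_ yS)
   /forallP /(_ z) /implyP /(_ zS).
Qed.

End Generic.
Section Core.
Context {disp : Order.disp_t} {L : finTBLatticeType disp}.
Local Open Scope order_scope.
Variables (n : nat) (m : nat -> L) (D : L -> {set 'I_n}).
Hypothesis Hm0 : m 0 = \bot.
Hypothesis Hmn : m n = \top.
Hypothesis Hmle : forall i j, (i <= j)%N -> (j <= n)%N -> m i <= m j.
Hypothesis HD1 : forall j, (j <= n)%N -> D (m j) = [set i : 'I_n | (i < j)%N].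
Hypothesis HD2 : forall x y, x <= y -> D x \subset D y.
Hypothesis HD3 : forall x y, x <= y -> D y \subset D x -> x = y.
Hypothesis HD4 : forall (i : 'I_n) j z, (i < j)%N -> (j <= n)%N -> i \in D z ->
  i \in D (m j `&` z).
Hypothesis HD5 : forall (i : 'I_n) j y, (j <= i)%N -> i \in D (y `|` m j) -> i \in D y.

Lemma HD2i (x y : L) (i : 'I_n) : x <= y -> i \in D x -> i \in D y.
Proof. by move/HD2/subsetP; apply. Qed.

Section Fun.
Variable K : {set L}.
Hypothesis chainK : forall a b, a \in K -> b \in K -> (a <= b) || (b <= a).

Definition ef (f : {ffun 'I_n.+1 -> L}) : L := \join_(i : 'I_n.+1) (m i `&` f i).

Definition Fset : {set {ffun 'I_n.+1 -> L}} :=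
  [set f : {ffun 'I_n.+1 -> L} | [forall i, f i \in K] &&
           [forall i : 'I_n.+1, forall j : 'I_n.+1, (i <= j)%N ==> (f j <= f i)]].

Lemma FsetP (f : {ffun 'I_n.+1 -> L}) : reflect ((forall i, f i \in K) /\
   (forall i j : 'I_n.+1, (i <= j)%N -> f j <= f i)) (f \in Fset).
Proof.
rewrite inE; apply: (iffP andP) => [[/forallP H1 H2]|[H1 H2]]; split => //.
  by move=> i j ij; move/forallP: H2 => /(_ i) /forallP /(_ j) /implyP; apply.
  by apply/forallP.
by apply/forallP => i; apply/forallP => j; apply/implyP; apply: H2.
Qed.

Lemma meet_comp (a b : L) : (a <= b) || (b <= a) -> (a `&` b = a) \/ (a `&` b = b).
Proof. by case/orP => H; [left; apply: meet_l | right; apply: meet_r]. Qed.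

Lemma join_comp (a b : L) : (a <= b) || (b <= a) -> (a `|` b = a) \/ (a `|` b = b).
Proof. by case/orP => H; [right; apply: join_r | left; apply: join_l]. Qed.

Lemma distr_comp (a b c : L) : (b <= c) || (c <= b) ->
  a `&` (b `|` c) = (a `&` b) `|` (a `&` c).
Proof.
case/orP => H.
  by rewrite (join_r H) join_r //; apply: leI2.
by rewrite (join_l H) join_l //; apply: leI2.
Qed.

Lemma eD (f : {ffun 'I_n.+1 -> L}) (i : 'I_n) : f \in Fset -> (i \in D (ef f)) = (i \in D (f (inord i.+1))).
Proof.
case/FsetP => HK Hdec; apply/idP/idP => H.
  apply: (HD5 (j := i)) => //; rewrite joinC.
  apply: HD2i H; apply/joinsP => k _.
  case: (leqP k i) => ki.
    by apply: lexUl; apply: le_trans (leIl _ _) _; apply: Hmle => //; apply: ltnW.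
  apply: lexUr; apply: le_trans (leIr _ _) _; apply: Hdec.
  by rewrite inordK // ltnS ltn_ord.
have H2 := HD4 (j := i.+1) (ltnSn i) (ltn_ord i) H.
apply: HD2i H2; rewrite /ef (bigD1 (inord i.+1)) //=.
rewrite inordK ?ltnS ?ltn_ord //; exact: leUl.
Qed.

Definition fmeet (f g : {ffun 'I_n.+1 -> L}) := [ffun i => f i `&` g i].
Definition fjoin (f g : {ffun 'I_n.+1 -> L}) := [ffun i => f i `|` g i].

Lemma fmeet_F (f g : {ffun 'I_n.+1 -> L}) : f \in Fset -> g \in Fset -> fmeet f g \in Fset.
Proof.
move=> /FsetP[Kf Df] /FsetP[Kg Dg]; apply/FsetP; split => [i|i j ij]; rewrite !ffunE.
  by case: (meet_comp (chainK (Kf i) (Kg i))) => ->.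
by apply: leI2; [apply: Df | apply: Dg].
Qed.

Lemma fjoin_F (f g : {ffun 'I_n.+1 -> L}) : f \in Fset -> g \in Fset -> fjoin f g \in Fset.
Proof.
move=> /FsetP[Kf Df] /FsetP[Kg Dg]; apply/FsetP; split => [i|i j ij]; rewrite !ffunE.
  by case: (join_comp (chainK (Kf i) (Kg i))) => ->.
by apply: leU2; [apply: Df | apply: Dg].
Qed.

Lemma ef_mono (f g : {ffun 'I_n.+1 -> L}) : (forall i, f i <= g i) -> ef f <= ef g.
Proof.
move=> H; apply/joinsP => i _; rewrite /ef (bigD1 i) //=.
by apply: lexUl; apply: leI2.
Qed.

Lemma ef_join (f g : {ffun 'I_n.+1 -> L}) : f \in Fset -> g \in Fset -> ef (fjoin f g) = ef f `|` ef g.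
Proof.
move=> /FsetP[Kf _] /FsetP[Kg _]; apply: le_anti; apply/andP; split.
  apply/joinsP => i _; rewrite ffunE distr_comp; last exact: chainK.
  apply: leU2; rewrite /ef (bigD1 i) //=; exact: leUl.
by rewrite leUx; apply/andP; split; apply: ef_mono => i; rewrite ffunE ?leUl ?leUr.
Qed.

Lemma ef_meet (f g : {ffun 'I_n.+1 -> L}) : f \in Fset -> g \in Fset -> ef (fmeet f g) = ef f `&` ef g.
Proof.
move=> Ff Fg.
have le1 : ef (fmeet f g) <= ef f `&` ef g.
  by rewrite lexI; apply/andP; split; apply: ef_mono => i; rewrite ffunE ?leIl ?leIr.
apply: HD3 => //; apply/subsetP => i Hi.
have Hf : i \in D (ef f) by apply: HD2i Hi; apply: leIl.
have Hg : i \in D (ef g) by apply: HD2i Hi; apply: leIr.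
rewrite eD ?fmeet_F // ffunE; rewrite eD // in Hf; rewrite eD // in Hg.
move: Ff Fg => /FsetP[Kf _] /FsetP[Kg _].
by case: (meet_comp (chainK (Kf (inord i.+1)) (Kg (inord i.+1)))) => ->.
Qed.

Definition Eset := [set ef f | f in Fset].

Lemma Eset_closed : meet_join_closed Eset.
Proof.
apply/forallP => x; apply/implyP => /imsetP[f Ff ->].
apply/forallP => y; apply/implyP => /imsetP[g Fg ->].
apply/andP; split; apply/imsetP.
  by exists (fmeet f g); [apply: fmeet_F | rewrite ef_meet].
by exists (fjoin f g); [apply: fjoin_F | rewrite ef_join].
Qed.

Lemma Eset_distr : distributive_set Eset.
Proof.
apply/forallP => x; apply/implyP => /imsetP[f Ff ->].
apply/forallP => y; apply/implyP => /imsetP[g Fg ->].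
apply/forallP => z; apply/implyP => /imsetP[h Fh ->].
rewrite -ef_join // -ef_meet ?fjoin_F // -!ef_meet // -ef_join ?fmeet_F //.
suff -> : fmeet f (fjoin g h) = fjoin (fmeet f g) (fmeet f h) by [].
apply/ffunP => i; rewrite !ffunE; apply: distr_comp.
by move: Fg Fh => /FsetP[Kg _] /FsetP[Kh _]; apply: chainK.
Qed.

Hypothesis botK : \bot \in K.
Hypothesis topK : \top \in K.

Lemma m_in_E j : (j <= n)%N -> m j \in Eset.
Proof.
move=> jn; apply/imsetP.
exists [ffun i : 'I_n.+1 => if (i <= j)%N then \top else \bot].
  apply/FsetP; split => [i|i k ik]; rewrite !ffunE.
    by case: ifP.
  case: ifP => kj; last exact: le0x.
  by rewrite (leq_trans ik kj) lexx.
apply: le_anti; apply/andP; split.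
  rewrite /ef (bigD1 (inord j)) //= ffunE inordK ?ltnS // leqnn meetx1.
  exact: leUl.
apply/joinsP => i _; rewrite ffunE; case: ifP => ij.
  by rewrite meetx1; apply: Hmle.
by rewrite meetx0 le0x.
Qed.

Lemma K_in_E (x : L) : x \in K -> x \in Eset.
Proof.
move=> xK; apply/imsetP; exists [ffun _ => x].
  by apply/FsetP; split => [i|i k ik]; rewrite !ffunE.
apply: le_anti; apply/andP; split.
  rewrite /ef (bigD1 ord_max) //= ffunE /= Hmn meet1x; exact: leUl.
by apply/joinsP => i _; rewrite ffunE leIr.
Qed.

End Fun.

Lemma core_supersolvable (c : seq L) : maxchain \bot \top c ->
  (forall x, x \in \bot :: c -> exists2 j, (j <= n)%N & x = m j) ->
  @supersolvable disp L.
Proof.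
move=> Hc Hmc; exists c; split => // C Cch.
pose K := C :|: [set \bot; \top].
have chainK : forall a b, a \in K -> b \in K -> (a <= b) || (b <= a).
  move=> a b; rewrite !inE => /orP[aC|/orP[]/eqP->] /orP[bC|/orP[]/eqP->];
    rewrite ?le0x ?lex1 ?orbT //.
  by move/forallP: Cch => /(_ a) /implyP /(_ aC) /forallP /(_ b) /implyP /(_ bC).
have botK : \bot \in K by rewrite !inE eqxx orbT.
have topK : \top \in K by rewrite !inE eqxx !orbT.
apply: (distr_sub _ (Eset_distr chainK)).
apply: gen_min; last exact: Eset_closed.
apply/subsetP => x; rewrite !inE => /orP[xm|xC].
  by case: (Hmc x xm) => j jn ->; apply: m_in_E.
by apply: K_in_E => //; rewrite !inE xC.
Qed.

Lemma Dbot : D \bot = set0.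
Proof. by rewrite -Hm0 HD1 //; apply/setP => i; rewrite !inE. Qed.

Lemma Dtop : D \top = setT.
Proof. by rewrite -Hmn HD1 //; apply/setP => i; rewrite !inE ltn_ord. Qed.

Lemma D_lt x y : x < y -> D x \proper D y.
Proof.
move=> xy; rewrite properEneq HD2 ?ltW // andbT.
apply/negP => /eqP E; have := HD3 (ltW xy); rewrite E subxx => /(_ isT) Exy.
by move: xy; rewrite Exy ltxx.
Qed.

Lemma chain_card s t c : maxchain s t c -> (#|D s| + size c <= #|D t|)%N.
Proof.
elim: c s => [|v c IH] s; first by rewrite maxchain_nil => /eqP->; rewrite addn0.
rewrite maxchain_cons => /andP[/coversW /D_lt /proper_card sv /IH H].
rewrite /= addnS -addSn; apply: leq_trans H; by rewrite leq_add2r.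
Qed.

Lemma cov_of_D x y (i : 'I_n) : x <= y -> i \notin D x -> D y = i |: D x -> covers x y.
Proof.
move=> xy iD Dy; have xy' : x < y.
  rewrite lt_neqAle xy andbT; apply/eqP => E; move: iD; rewrite E Dy.
  by rewrite !inE eqxx.
apply/andP; split => //; apply/forallP => z; apply/negP => /andP[xz zy].
have := leq_ltn_trans (proper_card (D_lt xz)) (proper_card (D_lt zy)).
by rewrite Dy cardsU1 iD add1n ltnn.
Qed.

Hypothesis Hgr : @graded_rank disp L n.

Lemma Dcov x y : covers x y -> exists2 i : 'I_n, i \notin D x & D y = i |: D x.
Proof.
move=> cxy; have [c1 H1] := exists_maxchain (le0x x).
have [c2 H2] := exists_maxchain (lex1 y).
have Hf : maxchain \bot \top (c1 ++ y :: c2).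
  by apply: (maxchain_cat H1); rewrite maxchain_cons cxy.
have := Hgr Hf; rewrite size_cat /= => Hn.
have := chain_card H1; rewrite Dbot cards0 add0n => s1.
have := chain_card H2; rewrite Dtop cardsT card_ord => s2.
have Hp := D_lt (coversW cxy).
have [i iy ix] : exists2 i : 'I_n, i \in D y & i \notin D x.
  by move/properP: Hp => [_ [i iy ix]]; exists i.
exists i => //; apply/eqP; rewrite eq_sym eqEcard; apply/andP; split.
  by rewrite subUset sub1set iy; move/properP: Hp => [].
rewrite cardsU1 ix add1n; apply: leq_trans (_ : (size c1).+1 <= _)%N.
  by rewrite -(leq_add2r (size c2)) addSn -addnS Hn.
by rewrite ltnS.
Qed.

Definition lab (x y : L) : nat := oapp (fun i : 'I_n => i.+1) 0%N [pick i in D y :\: D x].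
Definition lam : @labeling disp L := fun x y => Posz (lab x y).

Lemma lab_cov x y (i : 'I_n) : i \notin D x -> D y = i |: D x -> lab x y = i.+1.
Proof.
move=> ix Dy; rewrite /lab; case: pickP => [j|H] /=.
  rewrite Dy !inE => /andP[jx]; rewrite (negbTE jx) orbF => /eqP -> //.
by move: (H i) => /=; rewrite Dy !inE eqxx ix.
Qed.

Lemma labsP s t c : maxchain s t c ->
  [/\ forall i : 'I_n, (Posz i.+1 \in labels lam s c) = (i \in D t :\: D s),
      forall l, l \in labels lam s c -> exists i : 'I_n, l = Posz i.+1
    & uniq (labels lam s c)].
Proof.
elim: c s => [|v c IH] s.
  by rewrite maxchain_nil => /eqP->; split => // i; rewrite setDv inE.
rewrite maxchain_cons => /andP[cv Hc]; have [IH1 IH2 IH3] := IH _ Hc.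
have [i0 i0s Dv] := Dcov cv; have l0 := lab_cov i0s Dv.
have vt := maxchain_le Hc.
have i0t : i0 \in D t by apply: (subsetP (HD2 vt)); rewrite Dv !inE eqxx.
rewrite /labels /= -/(labels lam v c) /lam l0 -/lam; split.
- move=> i; rewrite inE IH1 eqz_nat eqSS Dv !inE.
  case: (eqVneq i i0) => [->|ne] /=; first by rewrite i0t i0s eqxx.
  by move: ne; rewrite -val_eqE => /negbTE ->.
- move=> l; rewrite inE => /orP[/eqP->|/IH2] //; by exists i0.
- by rewrite /= IH3 andbT IH1 Dv !inE eqxx.
Qed.

Lemma lexlt_cons a u b v : lexlt (a :: u) (b :: v) = ((a < b)%R || ((a == b) && lexlt u v)).
Proof. by []. Qed.

Lemma int_le_trans : transitive (fun a b : int => (a <= b)%R).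
Proof. by move=> a b c; apply: le_trans. Qed.

Lemma Dz s t j : s <= t -> (j <= n)%N ->
  D (s `|` (m j `&` t)) = D s :|: (D t :&: [set i : 'I_n | (i < j)%N]).
Proof.
move=> st jn; apply/eqP; rewrite eqEsubset; apply/andP; split; last first.
  rewrite subUset HD2 ?leUl //=; apply/subsetP => i; rewrite !inE => /andP[it ij].
  apply: HD2i (HD4 ij jn it); exact: leUr.
apply/subsetP => i Hi.
have le1 : s `|` (m j `&` t) <= (s `|` m j) `&` t.
  rewrite leUx !lexI leUl st leIr /= andbT.
  exact: le_trans (leIl _ _) (leUr _ _).
have /setIP[Hi1 Hi2] : i \in D (s `|` m j) :&: D t.
  by apply/setIP; split; apply: HD2i Hi; apply: le_trans le1 _; rewrite ?leIl ?leIr.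
rewrite !inE; case: (leqP j i) => ij.
  by rewrite (HD5 ij Hi1).
by rewrite Hi2 orbT.
Qed.

Lemma core_EL_aux k t : forall s, leq #|D t :\: D s| k -> s <= t ->
  exists c, [/\ maxchain s t c, increasing (labels lam s c)
        & forall c' : seq L, maxchain s t c' -> c' != c ->
            ~~ increasing (labels lam s c') /\
            lexlt (labels lam s c) (labels lam s c')].
Proof.
elim: k => [|k IH] s Hk st.
  have E : s = t.
    apply: HD3 => //; apply/subsetP => i it; case iS : (i \in D s) => //.
    by move: Hk; rewrite leqn0 => /eqP /cards0_eq /setP /(_ i); rewrite !inE it iS.
  subst s; exists [::]; split => //; first by rewrite maxchain_nil.
  by move=> c' /maxchain_refl ->; rewrite eqxx.
case: (eqVneq s t) => [E|nst].
  subst s; exists [::]; split => //; first by rewrite maxchain_nil.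
  by move=> c' /maxchain_refl ->; rewrite eqxx.
have st' : s < t by rewrite lt_neqAle nst st.
have [_ [i1 i1t i1s]] := properP (D_lt st').
have i1in : i1 \in D t :\: D s by rewrite inE i1t i1s.
case: (arg_minnP (fun i : 'I_n => val i) i1in) => i0 /setDP [i0t i0s] i0min.
have i0min' : forall i : 'I_n, i \in D t -> i \notin D s -> (i0 <= i)%N.
  by move=> i it iS; apply: i0min; apply/setDP; split.
pose u := s `|` (m i0.+1 `&` t).
have Du : D u = i0 |: D s.
  rewrite /u Dz //; apply/setP => i; rewrite !inE ltnS.
  case: (eqVneq i i0) => [->|ne] /=; first by rewrite i0t leqnn orbT.
  case iS : (i \in D s) => //=; apply/negP => /andP[it ii0].
  by move: (i0min' i it (negbT iS)) => i0i; move: ne; rewrite -val_eqE /= eqn_leq ii0 i0i.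
have su : s <= u by exact: leUl.
have ut : u <= t by rewrite leUx st leIr.
have csu : covers s u by apply: (cov_of_D su i0s Du).
have Hk' : leq #|D t :\: D u| k.
  rewrite -ltnS; apply: leq_trans Hk; apply: proper_card; apply/properP; split.
    by apply/subsetP => i; rewrite !inE Du !inE negb_or => /andP[/andP[_ ->] ->].
  by exists i0; rewrite !inE ?Du ?inE ?eqxx ?i0t ?i0s.
have [c0 [Hc0 inc0 min0]] := IH u Hk' ut.
have [L1 L2 L3] := labsP Hc0.
exists (u :: c0); split.
- by rewrite maxchain_cons csu.
- rewrite /increasing /labels /= -/(labels lam u c0) path_sortedE; last exact: int_le_trans.
  apply/andP; split; last exact: inc0.
  apply/allP => l Hl; have [i El] := L2 _ Hl; subst l.
  move: Hl; rewrite L1 !inE Du !inE negb_or => /andP[/andP[_ iS] it].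
  by rewrite /lam (lab_cov i0s Du) lez_nat ltnS i0min'.
move=> c'; case: c' => [|v c1]; first by rewrite maxchain_nil (negbTE nst).
rewrite maxchain_cons => /andP[csv Hc1] Hne.
have [l ls Dv] := Dcov csv.
have vt := maxchain_le Hc1.
have lt : l \in D t by apply: (subsetP (HD2 vt)); rewrite Dv !inE eqxx.
have [M1 M2 M3] := labsP Hc1.
rewrite /labels /= -/(labels lam u c0) -/(labels lam v c1).
rewrite /lam (lab_cov i0s Du) (lab_cov ls Dv) -/lam.
case: (eqVneq v u) => [Evu|nvu].
  subst v; have Hne' : c1 != c0 by apply: contraNneq Hne => ->.
  have [nI lx] := min0 c1 Hc1 Hne'.
  split.
    by apply: contra nI; rewrite /increasing /= => /path_sorted.
  have El : l = i0.
    by apply: val_inj; apply: succn_inj; rewrite -(lab_cov ls Dv) (lab_cov i0s Du).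
  by subst l; rewrite eqxx lx orbT.
have li0 : (i0 < l)%N.
  rewrite ltn_neqAle i0min' // andbT; apply/negP => /eqP E.
  have El : l = i0 by apply: val_inj.
  subst l; apply/negP: nvu; apply/negPn/eqP.
  pose w := (v `|` m i0.+1) `&` t.
  have vw : v <= w by rewrite lexI leUl vt.
  have Ew : w = v.
    apply/esym/HD3 => //; apply/subsetP => i Hi.
    have Hi1 : i \in D (v `|` m i0.+1) by apply: HD2i Hi; apply: leIl.
    have Hi2 : i \in D t by apply: HD2i Hi; apply: leIr.
    case: (leqP i0.+1 i) => ii0; first exact: (HD5 ii0 Hi1).
    rewrite Dv !inE; case iS : (i \in D s); first by rewrite orbT.
    have := i0min' i Hi2 (negbT iS); rewrite ltnS in ii0 => i0i.
    by apply/orP; left; rewrite -val_eqE /= eqn_leq ii0 i0i.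
  have uv : u <= v.
    rewrite leUx (ltW (coversW csv)) /=.
    rewrite -[X in _ <= X]Ew; apply: leI2; [exact: leUr | exact: lexx].
  by rewrite (covers_eq csv (coversW csu) uv).
split.
  rewrite /increasing /= path_sortedE; last exact: int_le_trans.
  apply/negP => /andP[/allP /(_ (Posz i0.+1)) H _].
  have : Posz i0.+1 \in labels lam v c1.
    rewrite M1 !inE Dv !inE negb_or i0t i0s andbT andbT.
    by apply/negP => /eqP E; move: li0; rewrite E ltnn.
  by move/H; rewrite lez_nat ltnS leqNgt li0.
by rewrite /= ltz_nat ltnS li0.
Qed.

Theorem core_EL : EL_labeling lam.
Proof. by move=> s t st; apply: (core_EL_aux (leqnn _) st). Qed.

Theorem core_Sn c : maxchain \bot \top c ->
  perm_eq (labels lam \bot c) (map Posz (iota 1 n)).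
Proof.
move=> Hc; have [L1 L2 L3] := labsP Hc.
apply: uniq_perm => //; first by rewrite map_inj_uniq ?iota_uniq //; move=> a b [].
move=> l; apply/idP/idP.
  move/L2 => [i ->]; apply/mapP; exists i.+1 => //; by rewrite mem_iota /= add1n ltnS ltn_ord.
case/mapP => k; rewrite mem_iota => /andP[k1 kn] ->.
have kn' : (k.-1 < n)%N by rewrite -ltnS prednK // -(add1n n).
have -> : k = (Ordinal kn').+1 by rewrite /= prednK.
by rewrite L1 Dtop Dbot !inE.
Qed.

Theorem core_SnEL : Sn_EL_labeling n lam.
Proof. split; [exact: core_EL | exact: core_Sn]. Qed.

End Core.

Section DirA.
Context {disp : Order.disp_t} {L : finTBLatticeType disp}.
Local Open Scope order_scope.
Variables (n : nat) (c : seq L).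
Hypothesis Hc : maxchain \bot \top c.
Hypothesis Hsize : size c = n.
Hypothesis Hdist : forall C : {set L}, is_chain C ->
  distributive_set (gen_sublattice ([set x in \bot :: c] :|: C)).

Definition mA (j : nat) : L := nth \bot (\bot :: c) j.
Definition DA (x : L) : {set 'I_n} := [set i : 'I_n | ~~ (mA i.+1 `&` x <= mA i)].

Lemma mA0 : mA 0 = \bot. Proof. by []. Qed.

Lemma mAn : mA n = \top.
Proof.
rewrite /mA -Hsize -[size c]/((size (\bot :: c)).-1) nth_last.
by move: Hc => /andP[_ /eqP].
Qed.

Lemma mAcov i : (i < n)%N -> covers (mA i) (mA i.+1).
Proof.
move=> iN; move: Hc => /andP[/pathP H _].
by apply: (H \bot); rewrite Hsize.
Qed.

Lemma mAle i j : (i <= j)%N -> (j <= n)%N -> mA i <= mA j.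
Proof.
move=> ij jn; have [k Ek] : exists k, j = (i + k)%N by exists (j - i)%N; rewrite subnKC.
subst j; move: jn {ij}; elim: k => [|k IH]; first by rewrite addn0.
rewrite addnS => Hk; apply: le_trans (IH (ltnW Hk)) _.
exact: ltW (coversW (mAcov Hk)).
Qed.

Lemma mAlt i j : (i < j)%N -> (j <= n)%N -> mA i < mA j.
Proof.
move=> ij jn; apply: lt_le_trans (coversW (mAcov (leq_trans ij jn))) _.
exact: mAle.
Qed.

Lemma mA_mem x : x \in \bot :: c -> exists2 j, (j <= n)%N & x = mA j.
Proof.
move=> xc; exists (index x (\bot :: c)); last by rewrite /mA nth_index.
by rewrite -ltnS -Hsize -[(size c).+1]/(size (\bot :: c)) index_mem.
Qed.

Definition Sab (a b : L) := gen_sublattice ([set x in \bot :: c] :|: [set a; b]).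

Lemma Sab_distr a b : a <= b -> distributive_set (Sab a b).
Proof.
move=> ab; apply: Hdist; apply/forallP => x; apply/implyP; rewrite !inE => Hx.
apply/forallP => y; apply/implyP; rewrite !inE => Hy.
by case/orP: Hx => /eqP-> ; case/orP: Hy => /eqP->; rewrite ?lexx ?ab ?orbT.
Qed.

Lemma Sab_a a b : a \in Sab a b.
Proof. by apply: (subsetP (gen_sub _)); rewrite !inE eqxx orbT. Qed.

Lemma Sab_b a b : b \in Sab a b.
Proof. by apply: (subsetP (gen_sub _)); rewrite !inE eqxx !orbT. Qed.

Lemma Sab_m a b j : (j <= n)%N -> mA j \in Sab a b.
Proof.
move=> jn; apply: (subsetP (gen_sub _)); apply/setUP; left.
by rewrite in_set /mA mem_nth // /= Hsize ltnS.
Qed.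

Lemma HA1 j : (j <= n)%N -> DA (mA j) = [set i : 'I_n | (i < j)%N].
Proof.
move=> jn; apply/setP => i; rewrite !inE.
case: (ltnP i j) => ij.
  rewrite meet_l; last by apply: mAle.
  by rewrite lt_geF // mAlt.
rewrite meet_r ?mAle //; exact: ltnW.
Qed.

Lemma HA2 x y : x <= y -> DA x \subset DA y.
Proof.
move=> xy; apply/subsetP => i; rewrite !inE; apply: contra => H.
by apply: le_trans H; apply: leI2.
Qed.

Lemma HA3 x y : x <= y -> DA y \subset DA x -> x = y.
Proof.
move=> xy sub; apply/eqP; apply/negPn/negP => nxy.
have nyx : ~~ (y <= x).
  by apply/negP => yx; move/negP: nxy; apply; rewrite eq_le xy yx.
have ex : exists k, (k <= n)%N && ~~ (mA k `&` y <= x).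
  by exists n; rewrite leqnn mAn meet1x.
case: (ex_minnP ex) => k /andP[kn Hk] kmin.
case: k kn Hk kmin => [|k] kn Hk kmin; first by move: Hk; rewrite mA0 meet0x le0x.
have kN : (k < n)%N by [].
have Hk' : mA k `&` y <= x.
  apply/negPn/negP => H; have := kmin k; rewrite (ltnW kN) H => /(_ isT).
  by rewrite ltnn.
pose i := Ordinal kN.
have iy : i \in DA y.
  rewrite inE; apply/negP => H; move/negP: Hk; apply.
  apply: le_trans Hk'; by rewrite lexI H leIr.
have := subsetP sub i iy; rewrite inE /= => ix.
have Ej : mA k `|` (mA k.+1 `&` x) = mA k.+1.
  apply: (covers_eq (mAcov kN)).
    rewrite lt_neqAle leUl andbT; apply/negP => /eqP E.
    by move/negP: ix; apply; rewrite E leUr.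
  by rewrite leUx (ltW (coversW (mAcov kN))) leIl.
have D3 := distrP (Sab_distr xy) (Sab_b x y) (Sab_m x y (ltnW kN))
  (gen_meet (Sab_m x y kN) (Sab_a x y)).
move/negP: Hk; apply; rewrite meetC -Ej D3 leUx; apply/andP; split.
  by rewrite meetC.
by rewrite meetA leIr.
Qed.

Lemma HA4 (i : 'I_n) j z : (i < j)%N -> (j <= n)%N -> i \in DA z -> i \in DA (mA j `&` z).
Proof.
by move=> ij jn; rewrite !inE meetA (meet_l (mAle ij jn)).
Qed.

Lemma HA5 (i : 'I_n) j y : (j <= i)%N -> i \in DA (y `|` mA j) -> i \in DA y.
Proof.
move=> ji; rewrite !inE; apply: contra => H.
have D3 := distrP (Sab_distr (lexx y)) (Sab_m y y (ltn_ord i)) (Sab_a y y)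
  (Sab_m y y (leq_trans ji (ltnW (ltn_ord i)))).
rewrite D3 leUx H /=; apply: le_trans (leIr _ _) _.
by apply: mAle => //; exact: ltnW.
Qed.

End DirA.

Theorem dirA {disp : Order.disp_t} {L : finTBLatticeType disp} (n : nat) :
  @graded_rank disp L n -> @supersolvable disp L ->
  exists lam : @labeling disp L, Sn_EL_labeling n lam.
Proof.
move=> Hgr [c [Hc Hdist]]; have Hsize : size c = n by apply: Hgr.
exists (lam (DA n c)).
apply: (core_SnEL (m := mA c) (D := DA n c)) => //.
- exact: mAn.
- exact: HA1.
- exact: HA2.
- exact: HA3.
- exact: HA4.
- exact: HA5.
Qed.

Section DirB.
Context {disp : Order.disp_t} {L : finTBLatticeType disp}.
Local Open Scope order_scope.
Variables (n : nat) (lm : @labeling disp L).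
Implicit Types (x y s t u v : L) (c : seq L).
Hypothesis Hel : EL_labeling lm.
Hypothesis Hsn : forall c : seq L, maxchain \bot \top c ->
  perm_eq (labels lm \bot c) (map Posz (iota 1 n)).

Definition In := map Posz (iota 1 n).

Lemma In_uniq : uniq In.
Proof. by rewrite map_inj_uniq ?iota_uniq //; move=> a b []. Qed.

Lemma In_mem (i : 'I_n) : Posz i.+1 \in In.
Proof. by apply/mapP; exists i.+1 => //; rewrite mem_iota /= add1n ltnS ltn_ord. Qed.

Lemma In_ord l : l \in In -> exists i : 'I_n, l = Posz i.+1.
Proof.
case/mapP => k; rewrite mem_iota => /andP[k1 kn] ->.
have kn' : (k.-1 < n)%N by rewrite -ltnS prednK // -(add1n n).
by exists (Ordinal kn'); rewrite /= prednK.
Qed.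

Definition chainto (x : L) : seq L := xchoose (exists_maxchain (le0x x)).
Definition chainfrom (x : L) : seq L := xchoose (exists_maxchain (lex1 x)).

Lemma chaintoP x : maxchain \bot x (chainto x).
Proof. exact: (xchooseP (exists_maxchain (le0x x))). Qed.

Lemma chainfromP x : maxchain x \top (chainfrom x).
Proof. exact: (xchooseP (exists_maxchain (lex1 x))). Qed.

Lemma labels_cat s c1 c2 :
  labels lm s (c1 ++ c2) = labels lm s c1 ++ labels lm (last s c1) c2.
Proof. exact: pairmap_cat. Qed.

Lemma maxchain_last s t c : maxchain s t c -> last s c = t.
Proof. by case/andP => _ /eqP. Qed.

Lemma labs_full s t c : maxchain s t c ->
  uniq (labels lm s c) /\
  forall l, (l \in labels lm s c) =
    [&& l \in In, l \notin labels lm \bot (chainto s) & l \notin labels lm t (chainfrom t)].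
Proof.
move=> Hc.
have Hf : maxchain \bot \top (chainto s ++ c ++ chainfrom t).
  apply: maxchain_cat (chaintoP s) _; exact: maxchain_cat Hc (chainfromP t).
have P := Hsn Hf.
rewrite !labels_cat (maxchain_last (chaintoP s)) (maxchain_last Hc) in P.
have U : uniq (labels lm \bot (chainto s) ++ labels lm s c ++ labels lm t (chainfrom t)).
  by rewrite (perm_uniq P) In_uniq.
move: (U); rewrite !cat_uniq => /and3P[_ H1 /and3P[Uc H2 _]].
split => // l; apply/idP/idP.
  move=> lc; rewrite -(perm_mem P) !mem_cat lc orbT /=.
  apply/andP; split.
    by apply/negP => ls; move/hasP: H1; apply; exists l => //; rewrite mem_cat lc.
  by apply/negP => lt; move/hasP: H2; apply; exists l.
case/and3P => lI ls lt; move: lI; rewrite -(perm_mem P) !mem_cat.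
by rewrite (negbTE ls) (negbTE lt) /= orbF.
Qed.

Fact DB_key : unit. Proof. by []. Qed.
Definition DB (x : L) : {set 'I_n} := locked_with DB_key
  [set i : 'I_n | Posz i.+1 \in labels lm \bot (chainto x)].

Lemma DBE x (i : 'I_n) : (i \in DB x) = (Posz i.+1 \in labels lm \bot (chainto x)).
Proof. by rewrite /DB locked_withE inE. Qed.

Lemma chainto_bot : chainto \bot = [::].
Proof. exact: maxchain_refl (chaintoP _). Qed.

Lemma DB_from x (i : 'I_n) : (i \in DB x) = (Posz i.+1 \notin labels lm x (chainfrom x)).
Proof.
have [_ H] := labs_full (chaintoP x).
by rewrite DBE H In_mem chainto_bot.
Qed.

Lemma labsD s t c : maxchain s t c -> forall i : 'I_n,
  (Posz i.+1 \in labels lm s c) = (i \in DB t :\: DB s).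
Proof.
move=> Hc i; have [_ H] := labs_full Hc.
by rewrite H In_mem /= in_setD (DB_from t) DBE.
Qed.

Lemma labsI s t c l : maxchain s t c -> l \in labels lm s c -> exists i : 'I_n, l = Posz i.+1.
Proof. by move=> Hc; have [_ ->] := labs_full Hc; case/and3P => /In_ord. Qed.

Lemma DBbot : DB \bot = set0.
Proof. by apply/setP => i; rewrite DBE inE chainto_bot. Qed.

Lemma DBtop : DB \top = setT.
Proof.
apply/setP => i; rewrite in_setT DB_from.
by rewrite (maxchain_refl (chainfromP \top)).
Qed.

Lemma HB2 x y : x <= y -> DB x \subset DB y.
Proof.
move=> xy; have [c Hc] := exists_maxchain xy.
have Hf := maxchain_cat Hc (chainfromP y).
apply/subsetP => i ix.
have := labsD Hf i; rewrite in_setD DBtop in_setT ix /= labels_cat (maxchain_last Hc) mem_cat.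
move/negbT; rewrite negb_or => /andP[_ H].
by rewrite DB_from.
Qed.

Lemma HB3 x y : x <= y -> DB y \subset DB x -> x = y.
Proof.
move=> xy sub; have [c Hc] := exists_maxchain xy.
case: c Hc => [|v c] Hc; first by apply/eqP.
have : lm x v \in labels lm x (v :: c) by rewrite inE eqxx.
move=> H; have [i Ei] := labsI Hc H; move: H; rewrite Ei (labsD Hc) in_setD.
by case/andP => /negP ix iy; case: ix; apply: (subsetP sub).
Qed.

Lemma HB2i x y (i : 'I_n) : x <= y -> i \in DB x -> i \in DB y.
Proof. by move/HB2/subsetP; apply. Qed.

Lemma split_incr s t c : maxchain s t c -> increasing (labels lm s c) ->
  forall j, exists u, [/\ s <= u, u <= t &
     DB u = DB s :|: (DB t :&: [set i : 'I_n | (i < j)%N])].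
Proof.
elim: c s => [|v c IH] s Hc Hinc j.
  move: Hc; rewrite maxchain_nil => /eqP <-; exists s; split => //.
  by apply/setP => i; rewrite in_setU in_setI; case: (i \in DB s).
move: (Hc); rewrite maxchain_cons => /andP[csv Hc1].
have Hsv : maxchain s v [:: v] by rewrite maxchain_cons csv maxchain_nil eqxx.
have [i0 Ei0] := labsI Hsv (mem_head _ _).
have Dv : DB v = i0 |: DB s.
  apply/setP => i; rewrite in_setU1.
  have := labsD Hsv i; rewrite /labels /= Ei0 inE eqz_nat eqSS in_setD => E.
  case: (eqVneq i i0) => [Ei|ne] /=.
    by subst i; move: E; rewrite eqxx => /esym/andP[_ ->].
  move: E; move: ne; rewrite -val_eqE => /negbTE ->.
  case iS : (i \in DB s) => /=; last by move=> <-.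
  by rewrite (subsetP (HB2 (ltW (coversW csv))) i iS).
have vt := maxchain_le Hc1.
have i0t : i0 \in DB t by apply: HB2i vt _; rewrite Dv !inE eqxx.
move: Hinc; rewrite /increasing /labels /= -/(labels lm v c) Ei0.
rewrite path_sortedE; last exact: int_le_trans.
case/andP => /allP Hall Hinc1.
case: (ltnP i0 j) => i0j.
  have [u [vu ut Du]] := IH v Hc1 Hinc1 j.
  exists u; split => //; first exact: le_trans (ltW (coversW csv)) vu.
  rewrite Du Dv; apply/setP => i; rewrite !inE.
  case: (eqVneq i i0) => [->|]; last by [].
  by rewrite i0t i0j !orbT.
exists s; split => //; first exact: maxchain_le Hc.
apply/setP => i; rewrite in_setU in_setI inE; case iS : (i \in DB s) => //=.
case it : (i \in DB t) => //=; apply/esym/negbTE/negP => ij.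
have : Posz i.+1 \in labels lm s (v :: c) by rewrite (labsD Hc) in_setD iS it.
rewrite /labels /= -/(labels lm v c) Ei0 inE eqz_nat eqSS => /orP[/eqP E|H].
  by move: ij; rewrite E ltnNge i0j.
by move: (Hall _ H); rewrite lez_nat ltnS leqNgt (leq_trans ij i0j).
Qed.

Lemma inc_chain s t : s <= t -> exists c, maxchain s t c /\ increasing (labels lm s c).
Proof. by move=> st; have [c [H1 H2 _]] := Hel st; exists c. Qed.


Variable cm : seq L.
Hypothesis Hcm : maxchain \bot \top cm.
Hypothesis Hcm_inc : increasing (labels lm \bot cm).
Hypothesis Hcm_min : forall c', maxchain \bot \top c' -> c' != cm ->
  ~~ increasing (labels lm \bot c') /\ lexlt (labels lm \bot cm) (labels lm \bot c').

Lemma size_cm : size cm = n.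
Proof. by rewrite -(size_pairmap lm \bot cm) (perm_size (Hsn Hcm)) size_map size_iota. Qed.

Lemma last_take_nth (x : L) (q : seq L) j : (j <= size q)%N -> last x (take j q) = nth x (x :: q) j.
Proof.
elim: q x j => [|y q IH] x [|j] //= Hj.
by rewrite IH //; apply: set_nth_default; rewrite /= ltnS.
Qed.

Lemma HB1 j : (j <= n)%N -> DB (mA cm j) = [set i : 'I_n | (i < j)%N].
Proof.
move=> jn; have Hs := Hcm; rewrite -(cat_take_drop j cm) in Hs.
have [Ht _] := maxchain_split Hs.
rewrite last_take_nth ?size_cm // in Ht.
have Hl : labels lm \bot (take j cm) = map Posz (iota 1 j).
  have Hsz : size (labels lm \bot (take j cm)) = j by rewrite size_pairmap size_take size_cm; case: ltngtP jn.
  have E : take j (labels lm \bot cm) = labels lm \bot (take j cm).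
    by rewrite -{1}(cat_take_drop j cm) labels_cat take_size_cat.
  rewrite -E.
  have Hin : labels lm \bot cm = In.
    apply: (@sorted_eq _ (fun a b : int => (a <= b)%R)).
    - exact: int_le_trans.
    - by move=> a b H; apply: le_anti.
    - exact: Hcm_inc.
    - rewrite /In sorted_map; apply: sub_sorted (iota_sorted 1 n) => a b /=.
      by rewrite lez_nat.
    - exact: Hsn.
  by rewrite Hin /In -map_take take_iota (minn_idPl jn).
apply/setP => i; rewrite inE -(setD0 (DB (mA cm j))) -DBbot -(labsD Ht) Hl.
by rewrite mem_map; [rewrite mem_iota /= add1n ltnS | move=> a b []].
Qed.


Lemma LemE u j : (j <= n)%N -> DB u = [set i : 'I_n | (i < j)%N] -> u = mA cm j.
Proof.
move=> jn Du.
have [c1 [H1 I1]] := inc_chain (le0x u); have [c2 [H2 I2]] := inc_chain (lex1 u).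
have Hf := maxchain_cat H1 H2.
have If : increasing (labels lm \bot (c1 ++ c2)).
  rewrite labels_cat (maxchain_last H1) /increasing (sorted_pairwise int_le_trans).
  rewrite pairwise_cat -!(sorted_pairwise int_le_trans).
  move: I1 I2; rewrite /increasing => -> ->; rewrite !andbT.
  apply/allrelP => a b aI bI.
  have [i Ei] := labsI H1 aI; have [k Ek] := labsI H2 bI; subst a b.
  move: aI bI; rewrite (labsD H1) (labsD H2) DBbot DBtop Du !inE /= andbT => ij.
  by rewrite -leqNgt lez_nat ltnS => /(leq_trans ij) /ltnW.
have Ecm : c1 ++ c2 = cm.
  apply/eqP; apply/negPn/negP => ne; have [nI _] := Hcm_min Hf ne.
  by rewrite If in nI.
have uin : u \in \bot :: cm.
  rewrite -Ecm; have := mem_last \bot c1; rewrite (maxchain_last H1) !inE mem_cat.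
  by case/orP => ->; rewrite ?orbT.
have [k kn Ek] := mA_mem size_cm uin.
have Djk : [set i : 'I_n | (i < j)%N] = [set i : 'I_n | (i < k)%N] by rewrite -Du Ek HB1.
suff -> : j = k by [].
case: (ltngtP j k) => // jk.
  have jN : (j < n)%N by apply: leq_trans jk kn.
  by move/setP: Djk => /(_ (Ordinal jN)); rewrite !inE /= ltnn jk.
have kN : (k < n)%N by apply: leq_trans jk jn.
by move/setP: Djk => /(_ (Ordinal kN)); rewrite !inE /= ltnn jk.
Qed.

Lemma HU x j : (j <= n)%N -> DB x \subset [set i : 'I_n | (i < j)%N] -> x <= mA cm j.
Proof.
move=> jn sub; have [c [Hc Ic]] := inc_chain (lex1 x).
have [u [xu _ Du]] := split_incr Hc Ic j.
have -> : mA cm j = u by apply/esym/LemE => //; rewrite Du DBtop setTI; apply/setUidPr.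
exact: xu.
Qed.

Lemma HDn x j : (j <= n)%N -> [set i : 'I_n | (i < j)%N] \subset DB x -> mA cm j <= x.
Proof.
move=> jn sub; have [c [Hc Ic]] := inc_chain (le0x x).
have [u [_ ux Du]] := split_incr Hc Ic j.
have -> : mA cm j = u by apply/esym/LemE => //; rewrite Du DBbot set0U; apply/setIidPr.
exact: ux.
Qed.

Lemma HB4 (i : 'I_n) j z : (i < j)%N -> (j <= n)%N -> i \in DB z -> i \in DB (mA cm j `&` z).
Proof.
move=> ij jn iz; have [c [Hc Ic]] := inc_chain (le0x z).
have [u [_ uz Du]] := split_incr Hc Ic j.
have um : u <= mA cm j by apply: HU => //; rewrite Du DBbot set0U subsetIr.
apply: (HB2i (x := u)); first by rewrite lexI um uz.
by rewrite Du !inE iz ij orbT.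
Qed.

Lemma HB5 (i : 'I_n) j y : (j <= i)%N -> i \in DB (y `|` mA cm j) -> i \in DB y.
Proof.
move=> ji iw; have jn : (j <= n)%N by apply: leq_trans ji (ltnW (ltn_ord i)).
have [c [Hc Ic]] := inc_chain (leUl y (mA cm j)).
have [u [yu uw Du]] := split_incr Hc Ic j.
have sub : [set i0 : 'I_n | (i0 < j)%N] \subset DB u.
  rewrite Du; apply/subsetP => k kj; apply/setUP; right; apply/setIP; split => //.
  by apply: (HB2i (x := mA cm j)); [exact: leUr | rewrite HB1 //].
have mu := HDn jn sub.
have Eu : u = y `|` mA cm j by apply: le_anti; rewrite uw leUx yu mu.
by move: iw; rewrite -Eu Du !inE ltnNge ji andbF orbF.
Qed.

End DirB.

Theorem dirB {disp : Order.disp_t} {L : finTBLatticeType disp} (n : nat) :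
  (exists lam : @labeling disp L, Sn_EL_labeling n lam) -> @supersolvable disp L.
Proof.
move=> [lm [Hel Hsn]].
have [cm [Hcm Hinc Hmin]] := Hel \bot%O \top%O (le0x _).
have Hsz := size_cm Hsn Hcm.
apply: (core_supersolvable (m := mA cm) (D := DB n lm) _ _ _ _ _ _ Hcm).
- exact: mAn.
- exact: mAle.
- exact: HB2.
- exact: HB3.
- by move=> i j z; apply: HB4.
- by move=> i j y; apply: HB5.
- by move=> x; apply: mA_mem.
Qed.

Unset Implicit Arguments.

Theorem mainTheorem1 (disp : Order.disp_t) (L : finTBLatticeType disp) (n : nat) :
  @graded_rank disp L n ->
  (@supersolvable disp L <-> exists lam : @labeling disp L, Sn_EL_labeling n lam).
Proof.
move=> Hgr; split; first exact: dirA.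
exact: dirB.
Qed.
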